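(* Let $G=(V,E)$ be a connected (finite, simple) graph. If there is a set $D\subseteq V$ such that $G[D]$ is connected and every vertex in $V\setminus D$ has at least two neighbors in $D$, then $\mathrm{rc}(G) \le |D|+1$.
   Context: For an edge-coloring of a graph $G$, a path is rainbow if no two of its edges have the same color; $G$ is rainbow-connected if every pair of vertices is joined by a rainbow path. The rainbow connection number $\mathrm{rc}(G)$ is the minimum number of colors in an edge-coloring making $G$ rainbow-connected. $G[D]$ denotes the subgraph induced by $D$. *)

(* Defs.v *)
From mathcomp Require Import all_boot.
Set Implicit Arguments. Unset Strict Implicit. Unset Printing Implicit Defensive.

Definition simple_graph (T : finType) (e : rel T) : Prop :=
  symmetric e /\ irreflexive e.

Definition connected_graph (T : finType) (e : rel T) : Prop :=
  forall x y : T, connect e x y.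

Definition induced_connected (T : finType) (e : rel T) (D : {set T}) : Prop :=
  forall x y, x \in D -> y \in D ->
    connect [rel u v | e u v && (u \in D) && (v \in D)] x y.

(* Edge colouring with k colours: a symmetric colour function on pairs;
   only its values on edges matter. *)
Definition edge_colouring (T : finType) (k : nat) := T -> T -> 'I_k.

Fixpoint path_colours (T : finType) (k : nat) (c : edge_colouring T k)
    (x : T) (p : seq T) : seq 'I_k :=
  match p with
  | [::] => [::]
  | y :: p' => c x y :: path_colours c y p'
  end.

Definition rainbow_path (T : finType) (e : rel T) (k : nat)
    (c : edge_colouring T k) (x y : T) (p : seq T) : bool :=
  [&& path e x p, last x p == y & uniq (path_colours c x p)].

Definition rainbow_connected (T : finType) (e : rel T) (k : nat)
    (c : edge_colouring T k) : Prop :=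
  forall x y : T, exists p : seq T, rainbow_path e c x y p.

Definition rc_le (T : finType) (e : rel T) (k : nat) : Prop :=
  exists c : edge_colouring T k,
    (forall x y, c x y = c y x) /\ rainbow_connected e c.

(* Main.v *)
Require Import Defs.
From mathcomp Require Import all_boot.
From mathcomp Require Import zify.
Set Implicit Arguments. Unset Strict Implicit. Unset Printing Implicit Defensive.

Lemma path_colours_rcons (T : finType) (k : nat) (c : edge_colouring T k) x p y :
  path_colours c x (rcons p y) = rcons (path_colours c x p) (c (last x p) y).
Proof. by elim: p x => //= a p IH x; rewrite IH. Qed.

Lemma tree_ex (T : finType) (e : rel T) (D : {set T}) (r : T) :
  symmetric e -> r \in D -> induced_connected e D ->
  exists par : T -> T, exists h : T -> nat,
   [/\ h r = 0, par r = r &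
    forall v, v \in D -> v != r -> [/\ par v \in D, e v (par v) & h (par v) < h v]].
Proof.
move=> esym rD Hc.
set eD := [rel u v | e u v && (u \in D) && (v \in D)].
pose F (S : {set T}) := S :|: [set v | [exists u in S, eD u v]].
pose R n := iter n F [set r].
have Rpath : forall p a n, path eD a p -> a \in R n -> last a p \in R (n + size p).
  elim=> [|b p IHp] a n /=; first by rewrite addn0.
  move=> /andP [eab pb] aR. rewrite -addSnnS. apply: IHp => //.
  rewrite /R /= /F in_setU; apply/orP; right. rewrite inE.
  by apply/existsP; exists a; rewrite aR.
have Hex : forall v, exists n, (v \notin D) || (v \in R n).
  move=> v; case vD: (v \in D) => /=; last by exists 0.
  have /connectP [p pP Ev] := Hc r v rD vD. exists (0 + size p).
  rewrite Ev. apply: Rpath => //. by rewrite /R /= inE.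
pose h v := ex_minn (Hex v).
have hspec : forall v, ((v \notin D) || (v \in R (h v))) /\
    forall n, (v \notin D) || (v \in R n) -> h v <= n.
  move=> v; rewrite /h; case: ex_minnP => m Pm Hm. by split.
have hr : h r = 0.
  have [_ H] := hspec r. apply/eqP; rewrite -leqn0; apply: H.
  by rewrite /R /= inE eqxx orbT.
have hpar : forall v, v \in D -> v != r -> exists u, (u \in D) && e v u && (h u < h v).
  move=> v vD vr. have [H1 H2] := hspec v. rewrite vD /= in H1 H2.
  move: H1 H2. case Hm: (h v) => [|k].
    by rewrite /R /= inE => /eqP E; rewrite E eqxx in vr.
  rewrite /R /= /F in_setU => /orP [vRk|].
    by move=> H2; have := H2 k vRk; rewrite ltnn.
  rewrite inE => /existsP [u /andP [uR /andP[/andP [euv uD] _]]] H2.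
  exists u. rewrite uD [e v u]esym euv /=.
  have [_ Hu] := hspec u. have := Hu k; rewrite uD /= => /(_ uR). by rewrite ltnS.
pose par v := if (v \in D) && (v != r) then
  odflt v [pick u | (u \in D) && e v u && (h u < h v)] else v.
exists par, h; split => //.
  by rewrite /par eqxx andbF.
move=> v vD vr. rewrite /par vD vr /=. case: pickP => [u /andP[/andP[-> ->] ->]|H] //=.
have [u Hu] := hpar v vD vr. by rewrite H in Hu.
Qed.

Lemma two_nb (T : finType) (e : rel T) (D : {set T}) :
  (forall v, v \notin D -> 1 < #|[set u in D | e v u]|) ->
  exists n1 n2 : T -> T, forall v, v \notin D ->
    [/\ n1 v \in D, n2 v \in D, e v (n1 v), e v (n2 v) & n1 v != n2 v].
Proof.
move=> H. pose S v := [set u in D | e v u].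
pose n1 v := odflt v [pick u in S v].
pose n2 v := odflt v [pick u in S v :\ n1 v].
exists n1, n2 => v vD. have Hv := H v vD.
have s1 : n1 v \in S v.
  rewrite /n1; case: pickP => [u //|H0] /=.
  have : #|S v| = 0 by apply: eq_card0 => u; exact: H0 u.
  by move=> E; rewrite /S E in Hv.
have s2 : n2 v \in S v :\ n1 v.
  rewrite /n2; case: pickP => [u //|H0] /=.
  have : #|S v :\ n1 v| = 0 by apply: eq_card0 => u; exact: H0 u.
  move: Hv; rewrite -/(S v) (cardsD1 (n1 v)) s1 => Hv E; by rewrite E in Hv.
rewrite !inE in s1 s2.
case/andP: s1 => a1 b1. case/andP: s2 => c2 /andP[a2 b2].
by split => //; rewrite eq_sym.
Qed.

Theorem lemma1 (T : finType) (e : rel T) (D : {set T}) :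
  simple_graph e -> connected_graph e ->
  induced_connected e D ->
  (forall v, v \notin D -> 1 < #|[set u in D | e v u]|) ->
  rc_le e #|D|.+1.
Proof.
move=> [esym eirr] Hconn HD Hnb.
case: (set_0Vmem D) => [D0 | [r rD]].
  exists (fun _ _ => ord0); split => // x.
  have := Hnb x. rewrite D0 in_set0 /= => /(_ isT).
  have -> : [set u in (set0 : {set T}) | e x u] = set0 by apply/setP => u; rewrite !inE.
  by rewrite cards0.
have [par [h [hr parr Hpar]]] := tree_ex esym rD HD.
have [n1 [n2 Hn]] := two_nb Hnb.
pose N := #|D|.
pose lab (w : T) : 'I_N.+1 := inord (index w (enum D)).
have idxlt w : w \in D -> index w (enum D) < N by rewrite /N cardE index_mem mem_enum.
have labD w : w \in D -> (lab w : nat) = index w (enum D).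
  by move=> wD; rewrite /lab inordK // ltnS ltnW // idxlt.
have labinj : {in D &, injective lab}.
  move=> u v uD vD /(congr1 val); rewrite /= !labD //.
  by move=> /(congr1 (nth u (enum D))); rewrite !nth_index ?mem_enum.
have labmax w : w \in D -> lab w != ord_max.
  move=> wD; rewrite -val_eqE /= labD //. by rewrite neq_ltn idxlt.
pose t x y : 'I_N.+1 := if (x != r) && (y == par x) then lab x
   else if (y != r) && (x == par y) then lab y else ord0.
pose g x y : 'I_N.+1 := if y == n1 x then lab r else if y == n2 x then ord_max else ord0.
pose c x y := if x \in D then (if y \in D then t x y else g y x)
              else (if y \in D then g x y else ord0).
have csym : forall x y, c x y = c y x.
  move=> x y; rewrite /c; case xD: (x \in D); case yD: (y \in D) => //.
  rewrite /t.
  case E1: ((x != r) && (y == par x)); case E2: ((y != r) && (x == par y)) => //.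
  move: E1 E2 => /andP[xr /eqP yx] /andP[yr /eqP xy].
  have [_ _ h1] := Hpar x xD xr; have [_ _ h2] := Hpar y yD yr.
  rewrite -yx in h1; rewrite -xy in h2. by move: (ltn_trans h1 h2); rewrite ltnn.
exists c; split; first exact: csym.
pose anc w v := exists k, iter k par v = w.
have iterD : forall k v, v \in D -> iter k par v \in D.
  elim=> // k IH v vD /=. have uD := IH v vD.
  case: (eqVneq (iter k par v) r) => [->|ur]; first by rewrite parr.
  by have [] := Hpar _ uD ur.
have iterh : forall k v, v \in D -> iter k par v = v \/ h (iter k par v) < h v.
  elim=> [|k IH] v vD; first by left.
  have uD := iterD k v vD. rewrite /=.
  case: (IH v vD) => [Hu|Hu].
    rewrite Hu. case: (eqVneq v r) => [->|vr]; first by left; exact: parr.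
    by right; have [] := Hpar v vD vr.
  right. case: (eqVneq (iter k par v) r) => [E|ur].
    by rewrite E parr; rewrite E in Hu.
  have [_ _ Hl] := Hpar _ uD ur. exact: ltn_trans Hl Hu.
have ancle : forall w v, v \in D -> anc w v -> h w <= h v /\ (h w = h v -> w = v).
  move=> w v vD [k <-]. case: (iterh k v vD) => [->|Hl]; first by [].
  split; [exact: ltnW| move=> E; by rewrite E ltnn in Hl].
have h0 : forall x, x \in D -> h x = 0 -> x = r.
  move=> x xD hx; apply/eqP; apply/negPn/negP => xr.
  by have [_ _] := Hpar x xD xr; rewrite hx.
have cpar : forall v, v \in D -> v != r -> c v (par v) = lab v.
  move=> v vD vr; have [pD _ _] := Hpar v vD vr.
  by rewrite /c vD pD /t vr eqxx.
have inD : forall n x y, h x + h y < n -> x \in D -> y \in D ->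
   exists p, [/\ path e x p, last x p = y, uniq (path_colours c x p) &
     forall col, col \in path_colours c x p -> exists w,
        [/\ col = lab w, w \in D, w != r & (anc w x \/ anc w y)]].
  elim=> // n IH x y Hlt xD yD.
  case: (eqVneq x y) => [<-|xy]; first by exists [::].
  case: (leqP (h y) (h x)) => Hyx.
    have xr : x != r.
      apply/eqP => E. move: Hyx; rewrite E hr leqn0 => /eqP /(h0 y yD) Ey.
      by rewrite E Ey eqxx in xy.
    have [pD exp hlt] := Hpar x xD xr.
    have [|p [pp pl pu pc]] := IH (par x) y _ pD yD; first by lia.
    exists (par x :: p). rewrite /= exp pp pl cpar //. split => //.
      rewrite pu andbT. apply/negP => /pc [w [Ew wD wr [Ha|Ha]]].
        have wx := labinj _ _ xD wD Ew. subst w.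
        have [le _] := ancle _ _ pD Ha. lia.
      have wx := labinj _ _ xD wD Ew. subst w.
      have [le eq] := ancle _ _ yD Ha. have E : h x = h y by lia.
      by rewrite (eq E) eqxx in xy.
    move=> col; rewrite inE => /orP [/eqP ->|/pc [w [Ew wD wr Ha]]].
      by exists x; split => //; left; exists 0.
    exists w; split => //. case: Ha => [[k Hk]|Hy]; last by right.
    by left; exists k.+1; rewrite iterSr.
  have yr : y != r by apply/eqP => E; rewrite E hr in Hyx.
  have [pD eyp hlt] := Hpar y yD yr.
  have [|p [pp pl pu pc]] := IH x (par y) _ xD pD; first by lia.
  exists (rcons p y). rewrite rcons_path pp pl [e _ y]esym eyp last_rcons.
  rewrite path_colours_rcons pl csym cpar // rcons_uniq pu. split => //; rewrite ?andbT.
    apply/negP => /pc [w [Ew wD wr [Ha|Ha]]].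
      have wx := labinj _ _ yD wD Ew. subst w.
      have [le _] := ancle _ _ xD Ha. lia.
    have wx := labinj _ _ yD wD Ew. subst w.
    have [le _] := ancle _ _ pD Ha. lia.
  move=> col; rewrite mem_rcons inE => /orP [/eqP ->|/pc [w [Ew wD wr Ha]]].
    by exists y; split => //; right; exists 0.
  exists w; split => //. case: Ha => [Hx|[k Hk]]; first by left.
  by right; exists k.+1; rewrite iterSr.
have inD' : forall x y, x \in D -> y \in D -> exists p,
   [/\ path e x p, last x p = y, uniq (path_colours c x p),
       lab r \notin path_colours c x p & ord_max \notin path_colours c x p].
  move=> x y xD yD.
  have [p [pp pl pu pc]] := inD (h x + h y).+1 x y (ltnSn _) xD yD.
  exists p; split => //; apply/negP => /pc [w [Ew wD wr _]].
    by move/(labinj _ _ rD wD) : Ew => E; rewrite E eqxx in wr.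
  by have := labmax w wD; rewrite -Ew eqxx.
move=> x y.
case xD: (x \in D); case yD: (y \in D).
- have [p [pp pl pu _ _]] := inD' x y xD yD.
  by exists p; rewrite /rainbow_path pp pl eqxx pu.
- have [a1D _ ea1 _ _] := Hn y (negbT yD).
  have [p [pp pl pu p1 p2]] := inD' x (n1 y) xD a1D.
  exists (rcons p y); rewrite /rainbow_path rcons_path pp pl [e _ y]esym ea1.
  rewrite last_rcons eqxx path_colours_rcons pl rcons_uniq pu andbT /=.
  have -> : c (n1 y) y = lab r by rewrite /c a1D yD /g eqxx.
  by rewrite p1.
- have [a1D _ ea1 _ _] := Hn x (negbT xD).
  have [p [pp pl pu p1 p2]] := inD' (n1 x) y a1D yD.
  exists (n1 x :: p); rewrite /rainbow_path /= ea1 pp pl eqxx /= pu andbT.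
  have -> : c x (n1 x) = lab r by rewrite /c xD a1D /g eqxx.
  by rewrite p1.
- have [a1D _ ea1 _ _] := Hn x (negbT xD).
  have [_ a2D _ ea2 n12] := Hn y (negbT yD).
  have [p [pp pl pu p1 p2]] := inD' (n1 x) (n2 y) a1D a2D.
  exists (n1 x :: rcons p y); rewrite /rainbow_path /= ea1 rcons_path pp pl.
  rewrite [e _ y]esym ea2 last_rcons eqxx path_colours_rcons pl rcons_uniq pu.
  have -> : c x (n1 x) = lab r by rewrite /c xD a1D /g eqxx.
  have -> : c (n2 y) y = ord_max by rewrite /c a2D yD /g eq_sym (negbTE n12) eqxx.
  by rewrite mem_rcons !inE negb_or (labmax r rD) p1 p2.
Qed.
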